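(* Let $p\ge1$, $l\in\mathbb{Z}_{\ge0}$, and $s_1,\dots,s_p\in\mathbb{C}$ with $|s_i|<1$ or $s_i=1$ for every $1\le i\le p$. Then for every $\varepsilon>0$, $(\Delta^l\mathtt{c}_{s_1,\dots,s_p,0})(m)=O\bigl(m^{-(l+1-\varepsilon)}\bigr)$ as $m\to\infty$.
   Context: Convention $0^0=1$. For $u_1,\dots,u_q\in\mathbb{C}$, $\mathtt{c}_{u_1,\dots,u_q}(m)=\sum_{m=m_1\ge\cdots\ge m_q\ge0}\frac{u_1^{m_1-m_2}\cdots u_{q-1}^{m_{q-1}-m_q}}{(m_1+1)\cdots(m_{q-1}+1)}u_q^{m_q}$; here $q=p+1$ and $u_{p+1}=0$. $(\Delta a)(m)=a(m)-a(m+1)$. *)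

(* Defs.v *)
From Stdlib Require Import Reals List.
From Coquelicot Require Import Coquelicot.
Open Scope R_scope.

Fixpoint cpow (z : C) (n : nat) : C :=
  match n with
  | O => 1%C
  | S k => Cmult z (cpow z k)
  end.

(* c_{u_1,...,u_q}(m) defined by recursion on the list [u_1;...;u_q]:
   c_{[u]}(m) = u^m,
   c_{u_1 :: us}(m) = sum_{m_2=0}^{m} u_1^{m-m_2}/(m+1) * c_{us}(m_2).
   This unfolds exactly to
   sum_{m=m_1>=...>=m_q>=0} prod_{i<q} u_i^{m_i-m_{i+1}}/(m_i+1) * u_q^{m_q}.
   (The empty list gives 0; it is never used.) *)
Fixpoint csum (f : nat -> C) (n : nat) : C :=
  match n with
  | O => f O
  | S k => Cplus (csum f k) (f (S k))
  end.

Fixpoint cseq (us : list C) (m : nat) : C :=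
  match us with
  | nil => 0%C
  | u :: nil => cpow u m
  | u :: us' =>
      csum (fun m2 => Cmult (Cmult (cpow u (m - m2)) (RtoC (/ INR (S m))))
                            (cseq us' m2)) m
  end.

Definition Delta (a : nat -> C) : nat -> C := fun m => Cminus (a m) (a (S m)).
Definition Deltan (l : nat) (a : nat -> C) : nat -> C := Nat.iter l Delta a.

(* Main.v *)
Require Import Defs.
From Stdlib Require Import Reals List Lra Lia Psatz.
From Coquelicot Require Import Coquelicot.
Open Scope R_scope.

Definition Harm (m : nat) : R := sum_f_R0 (fun k => / INR (S k)) m.

Lemma H_S m : Harm (S m) = Harm m + / INR (S (S m)).
Proof. reflexivity. Qed.

Lemma INRS_pos n : 0 < INR (S n).
Proof. apply lt_0_INR; lia. Qed.

Lemma H_ge1 m : 1 <= Harm m.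
Proof. induction m. unfold Harm; simpl. lra.
 rewrite H_S. pose proof (Rinv_0_lt_compat _ (INRS_pos (S m))). lra. Qed.

Lemma H_le_S m : Harm m <= Harm (S m).
Proof. rewrite H_S. pose proof (Rinv_0_lt_compat _ (INRS_pos (S m))). lra. Qed.

Lemma H_mono k m : (k <= m)%nat -> Harm k <= Harm m.
Proof. induction 1. lra. pose proof (H_le_S m). lra. Qed.

Lemma H_S_le2 m : Harm (S m) <= 2 * Harm m.
Proof. rewrite H_S. pose proof (H_ge1 m).
  assert (/ INR (S (S m)) <= 1). { rewrite <- Rinv_1. apply Rinv_le_contravar. lra.
  rewrite S_INR. pose proof (pos_INR (S m)). lra. } lra. Qed.

Lemma H_pow_S_le d m : Harm (S m) ^ d <= 2 ^ d * Harm m ^ d.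
Proof. rewrite <- Rpow_mult_distr. apply pow_incr. split. pose proof (H_ge1 (S m)); lra.
  apply H_S_le2. Qed.

Lemma H_pow_ge1 d m : 1 <= Harm m ^ d.
Proof. induction d. simpl; lra. simpl. pose proof (H_ge1 m). nra. Qed.

Lemma H_pow_le_S d m : Harm m ^ d <= Harm m ^ S d.
Proof. simpl. pose proof (H_ge1 m). pose proof (H_pow_ge1 d m). nra. Qed.

Lemma H_pow_mono d k m : (k <= m)%nat -> Harm k ^ d <= Harm m ^ d.
Proof. intros. apply pow_incr. split. pose proof (H_ge1 k); lra. apply H_mono; auto. Qed.

Lemma ln_le_minus1 y : 0 < y -> ln y <= y - 1.
Proof. intros Hy. pose proof (exp_ineq1_le (ln y)) as E. rewrite exp_ln in E; lra. Qed.

Lemma H_le_ln m : Harm m <= 1 + ln (INR (S m)).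
Proof.
  induction m. unfold Harm; simpl. rewrite ln_1. lra.
  rewrite H_S.
  assert (/ INR (S (S m)) <= ln (INR (S (S m))) - ln (INR (S m))).
  { pose proof (INRS_pos m) as Ha. rewrite (S_INR (S m)).
    set (a := INR (S m)) in *.
    assert (Hq : ln (a * / (a+1)) <= a * / (a+1) - 1)
      by (apply ln_le_minus1; apply Rmult_lt_0_compat; [lra| apply Rinv_0_lt_compat; lra]).
    rewrite ln_mult, ln_Rinv in Hq by (try apply Rinv_0_lt_compat; lra).
    replace (a * / (a+1) - 1) with (- / (a+1)) in Hq by (field; lra). lra. }
  lra.
Qed.

Lemma bernoulli h n : 0 <= h -> 1 + INR n * h <= (1 + h) ^ n.
Proof. intros Hh. induction n. simpl; lra.
  rewrite S_INR. simpl. pose proof (pos_INR n).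
  assert (0 <= INR n * h * h) by (apply Rmult_le_pos; [apply Rmult_le_pos|]; lra). nra. Qed.

Lemma P1 s : 0 <= s < 1 -> exists A, forall n, s ^ n * INR (S n) <= A.
Proof.
  intros [H0 H1]. set (t := (1 + s) / 2). assert (0 < t < 1) by (unfold t; lra).
  set (h := / t - 1). assert (Hh : 0 < h).
  { unfold h. assert (1 < / t). { rewrite <- Rinv_1. apply Rinv_lt_contravar; lra. } lra. }
  exists ((1 + h) / h). intros n.
  assert (Hth : t * (1 + h) = 1) by (unfold h; field; lra).
  assert (E : t ^ n * (1 + h) ^ n = 1) by (rewrite <- Rpow_mult_distr, Hth; apply pow1).
  pose proof (bernoulli h n (Rlt_le _ _ Hh)).
  assert (Htn : 0 <= t ^ n) by (apply pow_le; lra).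
  assert (Hst : s ^ n <= t ^ n) by (apply pow_incr; unfold t; lra).
  assert (Hsn : 0 <= s ^ n) by (apply pow_le; lra).
  assert (t ^ n * (1 + INR n * h) <= 1) by (apply Rle_trans with (t ^ n * (1 + h) ^ n); [apply Rmult_le_compat_l; auto | lra]).
  rewrite S_INR. pose proof (pos_INR n).
  assert (s ^ n * (INR n + 1) <= t ^ n * (INR n + 1)) by (apply Rmult_le_compat_r; lra).
  assert (t ^ n * (INR n + 1) * h <= t ^ n * (1 + INR n * h) * (1 + h)).
  { rewrite !Rmult_assoc. apply Rmult_le_compat_l; auto. nra. }
  apply (Rmult_le_reg_r h); auto. replace ((1 + h) / h * h) with (1 + h) by (field; lra).
  assert (t ^ n * (1 + INR n * h) * (1 + h) <= 1 * (1 + h)) by (apply Rmult_le_compat_r; lra).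
  nra.
Qed.

Lemma INRS_pos' n : 0 < INR (S n).
Proof. apply lt_0_INR; lia. Qed.

Lemma P r : forall s, 0 <= s < 1 -> exists A, forall n, s ^ n * INR (S n) ^ r <= A.
Proof.
  induction r; intros s Hs.
  - exists 1. intros n. simpl. rewrite Rmult_1_r. rewrite <- (pow1 n). apply pow_incr; lra.
  - set (t := sqrt s).
    assert (Ht : 0 <= t < 1).
    { unfold t; split. apply sqrt_pos. rewrite <- sqrt_1. apply sqrt_lt_1; lra. }
    destruct (IHr t Ht) as [A1 HA1]. destruct (P1 t Ht) as [A2 HA2].
    exists (A1 * A2). intros n.
    assert (Es : s ^ n = t ^ n * t ^ n) by (rewrite <- Rpow_mult_distr; unfold t; rewrite sqrt_sqrt; lra).
    rewrite Es. rewrite <- tech_pow_Rmult.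
    replace (t ^ n * t ^ n * (INR (S n) * INR (S n) ^ r)) with
      ((t ^ n * INR (S n) ^ r) * (t ^ n * INR (S n))) by ring.
    pose proof (INRS_pos' n). 
    assert (0 <= t ^ n) by (apply pow_le; lra).
    apply Rmult_le_compat; auto; apply Rmult_le_pos; try apply pow_le; lra.
Qed.

Lemma sum_shift x phi m :
  sum_f_R0 (fun k => x ^ (S m - k) * phi k) (S m) =
  x * sum_f_R0 (fun k => x ^ (m - k) * phi k) m + phi (S m).
Proof.
  change (sum_f_R0 ?f (S m)) with (sum_f_R0 f m + f (S m)).
  cbv beta. rewrite Nat.sub_diag, scal_sum. rewrite pow_O, Rmult_1_l. f_equal.
  apply sum_eq. intros i Hi. replace (S m - i)%nat with (S (m - i)) by lia. rewrite <- tech_pow_Rmult. ring.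
Qed.

Lemma geo_sum_le x m : 0 <= x < 1 -> sum_f_R0 (fun k => x ^ (m - k) * 1) m <= / (1 - x).
Proof.
  intros Hx. assert (1 <= / (1 - x)).
  { rewrite <- Rinv_1. apply Rinv_le_contravar; lra. }
  induction m. simpl. lra.
  rewrite sum_shift.
  assert (x * / (1 - x) + 1 = / (1 - x)) by (field; lra).
  assert (x * sum_f_R0 (fun k => x ^ (m - k) * 1) m <= x * / (1 - x)) by (apply Rmult_le_compat_l; lra).
  lra.
Qed.

Lemma filterR q G F K d r : 0 <= q < 1 ->
  (forall m, G (S m) <= q * G m + F (S m)) ->
  (forall m, F m <= K * Harm m ^ d / INR (S m) ^ (S r)) ->
  exists C, forall m, G m <= C * Harm m ^ d / INR (S m) ^ r.
Proof.
  intros Hq HG HF.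
  set (phi := fun k => match k with O => G O | S _ => F k end).
  assert (Hsum : forall m, G m <= sum_f_R0 (fun k => q ^ (m - k) * phi k) m).
  { induction m. simpl. lra. rewrite sum_shift. simpl phi.
    specialize (HG m). assert (q * G m <= q * sum_f_R0 (fun k => q ^ (m - k) * phi k) m)
      by (apply Rmult_le_compat_l; lra). lra. }
  set (t := sqrt q).
  assert (Ht : 0 <= t < 1).
  { unfold t; split. apply sqrt_pos. rewrite <- sqrt_1. apply sqrt_lt_1; lra. }
  assert (Eq : forall n, q ^ n = t ^ n * t ^ n)
    by (intros; rewrite <- Rpow_mult_distr; unfold t; rewrite sqrt_sqrt; lra).
  destruct (P r t Ht) as [A HA].
  set (K0 := Rmax (Rabs K) (G O)).
  assert (HK0 : 0 <= K0) by (unfold K0; eapply Rle_trans; [apply Rabs_pos| apply Rmax_l]).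
  assert (HA0 : 0 <= A) by (eapply Rle_trans; [|apply (HA O)]; apply Rmult_le_pos; [apply pow_le; lra| apply pow_le, pos_INR]).
  exists (K0 * A / (1 - t)). intros m.
  eapply Rle_trans. apply Hsum.
  set (W := K0 * A * Harm m ^ d / INR (S m) ^ r).
  assert (HW : 0 <= W).
  { unfold W. unfold Rdiv. apply Rmult_le_pos. apply Rmult_le_pos. nra.
    pose proof (H_pow_ge1 d m). lra. apply Rlt_le, Rinv_0_lt_compat, pow_lt, INRS_pos. }
  apply Rle_trans with (sum_f_R0 (fun k => t ^ (m - k) * 1 * W) m).
  - apply sum_Rle. intros k Hk.
    assert (Hphi : phi k <= K0 * Harm k ^ d / INR (S k) ^ r).
    { destruct k as [|k'].
      - simpl phi. replace (INR (S 0) ^ r) with 1 by (simpl; rewrite pow1; reflexivity). pose proof (H_pow_ge1 d O). unfold Rdiv. rewrite Rinv_1, Rmult_1_r.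
        assert (G O <= K0) by apply Rmax_r. 
        assert (0 <= G O \/ G O < 0) as [|] by lra; nra.
      - simpl phi. eapply Rle_trans. apply HF.
        pose proof (INRS_pos (S k')). pose proof (H_pow_ge1 d (S k')).
        assert (K <= K0) by (unfold K0; eapply Rle_trans; [apply Rle_abs|apply Rmax_l]).
        unfold Rdiv. rewrite !Rmult_assoc. 
        assert (Hp : 0 < INR (S (S k')) ^ r) by (apply pow_lt; lra).
        assert (/ INR (S (S k')) ^ S r <= / INR (S (S k')) ^ r).
        { apply Rinv_le_contravar; auto. rewrite <- tech_pow_Rmult. assert (1 <= INR (S (S k'))).
          rewrite S_INR. pose proof (pos_INR (S k')); lra. nra. }
        assert (0 < / INR (S (S k')) ^ S r) by (apply Rinv_0_lt_compat, pow_lt; lra).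
        apply Rle_trans with (K0 * (Harm (S k') ^ d * / INR (S (S k')) ^ S r)).
        apply Rmult_le_compat_r. apply Rmult_le_pos; lra. auto.
        apply Rmult_le_compat_l; auto. apply Rmult_le_compat_l; lra. }
    assert (Hkey : q ^ (m - k) * INR (S m) ^ r <= A * t ^ (m - k) * INR (S k) ^ r).
    { assert (Hn : (S m <= S k * S (m - k))%nat) by nia.
      apply le_INR in Hn. rewrite mult_INR in Hn.
      assert (INR (S m) ^ r <= INR (S k) ^ r * INR (S (m - k)) ^ r).
      { rewrite <- Rpow_mult_distr. apply pow_incr. split; auto. pose proof (pos_INR (S m)); lra. }
      rewrite Eq. specialize (HA (m - k)%nat).
      assert (0 <= t ^ (m - k)) by (apply pow_le; lra).
      assert (0 <= INR (S k) ^ r) by (apply pow_le, pos_INR).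
      apply Rle_trans with (t ^ (m - k) * INR (S k) ^ r * (t ^ (m - k) * INR (S (m - k)) ^ r)).
      replace (t ^ (m - k) * INR (S k) ^ r * (t ^ (m - k) * INR (S (m - k)) ^ r))
        with (t ^ (m - k) * t ^ (m - k) * (INR (S k) ^ r * INR (S (m - k)) ^ r)) by ring.
      apply Rmult_le_compat_l; auto. apply Rmult_le_pos; auto.
      replace (A * t ^ (m - k) * INR (S k) ^ r) with (t ^ (m - k) * INR (S k) ^ r * A) by ring.
      apply Rmult_le_compat_l; auto. apply Rmult_le_pos; auto. }
    assert (HHk : Harm k ^ d <= Harm m ^ d) by (apply H_pow_mono; auto).
    assert (Hqk : 0 <= q ^ (m - k)) by (apply pow_le; lra).
    assert (Hpk : 0 < INR (S k) ^ r) by (apply pow_lt, INRS_pos).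
    assert (Hpm : 0 < INR (S m) ^ r) by (apply pow_lt, INRS_pos).
    apply Rle_trans with (q ^ (m - k) * (K0 * Harm m ^ d / INR (S k) ^ r)).
    apply Rmult_le_compat_l; auto. eapply Rle_trans; [apply Hphi|].
    unfold Rdiv. apply Rmult_le_compat_r. apply Rlt_le, Rinv_0_lt_compat; auto.
    apply Rmult_le_compat_l; auto.
    unfold W. unfold Rdiv.
    replace (q ^ (m - k) * (K0 * Harm m ^ d * / INR (S k) ^ r)) with
      ((K0 * Harm m ^ d) * (q ^ (m - k) * / INR (S k) ^ r)) by ring.
    replace (t ^ (m - k) * 1 * (K0 * A * Harm m ^ d * / INR (S m) ^ r)) with
      ((K0 * Harm m ^ d) * (A * t ^ (m - k) * / INR (S m) ^ r)) by ring.
    apply Rmult_le_compat_l. pose proof (H_pow_ge1 d m). nra.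
    apply (Rmult_le_reg_r (INR (S k) ^ r * INR (S m) ^ r)). nra.
    replace (q ^ (m - k) * / INR (S k) ^ r * (INR (S k) ^ r * INR (S m) ^ r)) with
      (q ^ (m - k) * INR (S m) ^ r) by (field; lra).
    replace (A * t ^ (m - k) * / INR (S m) ^ r * (INR (S k) ^ r * INR (S m) ^ r)) with
      (A * t ^ (m - k) * INR (S k) ^ r) by (field; lra). auto.
  - rewrite <- scal_sum. pose proof (geo_sum_le t m Ht).
    replace (K0 * A / (1 - t) * Harm m ^ d / INR (S m) ^ r) with (W * / (1 - t)) by (unfold W; field; pose proof (INRS_pos m); repeat split; try lra; apply pow_nonzero; lra).
    apply Rmult_le_compat_l; auto.
Qed.

Lemma Deltan_S j a m : Deltan (S j) a m = Cminus (Deltan j a m) (Deltan j a (S m)).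
Proof. reflexivity. Qed.

Lemma csum_ext f g n : (forall k, (k <= n)%nat -> f k = g k) -> csum f n = csum g n.
Proof. induction n; intros H; simpl. apply H; lia.
 rewrite IHn by (intros; apply H; lia). rewrite H; auto. Qed.

Lemma csum_mult_l c f n : csum (fun k => Cmult c (f k)) n = Cmult c (csum f n).
Proof. induction n; simpl; auto. rewrite IHn. ring. Qed.

Definition T (u : C) (a : nat -> C) (m : nat) : C :=
  csum (fun m2 => Cmult (Cmult (cpow u (m - m2)) (RtoC (/ INR (S m)))) (a m2)) m.

Definition B (u : C) (a : nat -> C) (m : nat) : C :=
  csum (fun k => Cmult (cpow u (m - k)) (a k)) m.

Lemma cseq_cons u s : cseq (u :: s ++ RtoC 0 :: nil) = T u (cseq (s ++ RtoC 0 :: nil)).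
Proof. destruct s; reflexivity. Qed.

Lemma B_T u a m : B u a m = Cmult (RtoC (INR (S m))) (T u a m).
Proof.
  unfold T, B.
  rewrite <- csum_mult_l. apply csum_ext; intros k _.
  assert (H : INR (S m) <> 0) by (apply not_0_INR; lia).
  rewrite (Cmult_comm (cpow u (m - k))).
  transitivity (Cmult (Cmult (RtoC (INR (S m))) (RtoC (/ INR (S m)))) (Cmult (cpow u (m-k)) (a k))).
  rewrite <- RtoC_mult, Rinv_r by auto. ring. ring.
Qed.

Lemma B_rec u a m : B u a (S m) = Cplus (Cmult u (B u a m)) (a (S m)).
Proof.
  unfold B. change (csum ?f (S m)) with (Cplus (csum f m) (f (S m))).
  cbv beta. rewrite Nat.sub_diag.
  rewrite <- csum_mult_l. f_equal.
  apply csum_ext; intros k Hk. replace (S m - k)%nat with (S (m - k)) by lia.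
  change (cpow u (S (m-k))) with (Cmult u (cpow u (m-k))). ring.
  change (cpow u 0) with (RtoC 1). ring.
Qed.

Lemma filter_Delta u g f :
  (forall m, g (S m) = Cplus (Cmult u (g m)) (f (S m))) ->
  forall j m, Deltan j g (S m) = Cplus (Cmult u (Deltan j g m)) (Deltan j f (S m)).
Proof.
  intros H j; induction j; intros m. apply H.
  rewrite !Deltan_S, !IHj. ring.
Qed.

Lemma leibniz b c :
  (forall m, b m = Cmult (RtoC (INR (S m))) (c m)) ->
  forall j m, Deltan (S j) b m =
    Cminus (Cmult (RtoC (INR (S m))) (Deltan (S j) c m))
           (Cmult (RtoC (INR (S j))) (Deltan j c (S m))).
Proof.
  intros H j; induction j; intros m.
  - rewrite (Deltan_S 0 b), (Deltan_S 0 c). change (Deltan 0 b) with b; change (Deltan 0 c) with c.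
    rewrite !H. rewrite (S_INR (S m)). rewrite RtoC_plus. change (INR 1) with 1%R. ring.
  - rewrite (Deltan_S (S j) b m), !IHj.
    rewrite (Deltan_S (S j) c m), (Deltan_S j c (S m)).
    rewrite (S_INR (S m)), (S_INR (S j)), !RtoC_plus. ring.
Qed.

Definition Class d (a : nat -> C) := forall j, exists K, forall m,
  Cmod (Deltan j a m) <= K * Harm m ^ d / INR (S m) ^ (S j).

Lemma bound_mono K h1 h2 p1 p2 : 0 <= K -> 0 <= h1 <= h2 -> 0 < p2 <= p1 ->
  K * h1 / p1 <= K * h2 / p2.
Proof. intros. unfold Rdiv. apply Rmult_le_compat. nra.
  apply Rlt_le, Rinv_0_lt_compat; lra. apply Rmult_le_compat_l; lra.
  apply Rinv_le_contravar; lra. Qed.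

Lemma abs_weak x K h p : 0 <= h -> 0 < p -> x <= K * h / p -> x <= Rabs K * h / p.
Proof. intros. eapply Rle_trans; [eassumption|]. unfold Rdiv.
  apply Rmult_le_compat_r. apply Rlt_le, Rinv_0_lt_compat; lra.
  apply Rmult_le_compat_r; auto. apply Rle_abs. Qed.

Lemma pow_pos_INR m n : 0 < INR (S m) ^ n.
Proof. apply pow_lt, INRS_pos. Qed.

Lemma pow_S_le m n : INR (S m) ^ n <= INR (S (S m)) ^ n.
Proof. apply pow_incr. split. apply pos_INR. apply le_INR; lia. Qed.

Lemma pow_le_S' m n : INR (S m) ^ n <= INR (S m) ^ S n.
Proof. rewrite <- tech_pow_Rmult. pose proof (pow_pos_INR m n).
  assert (1 <= INR (S m)) by (rewrite S_INR; pose proof (pos_INR m); lra). nra. Qed.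

Lemma shift_bound K e n m : 0 <= K ->
  K * Harm (S m) ^ e / INR (S (S m)) ^ n <= (K * 2 ^ e) * Harm m ^ e / INR (S m) ^ n.
Proof. intros HK.
  replace (K * 2 ^ e * Harm m ^ e) with (K * (2 ^ e * Harm m ^ e)) by ring.
  apply bound_mono; auto. split. pose proof (H_pow_ge1 e (S m)); lra. apply H_pow_S_le.
  split. apply pow_pos_INR. apply pow_S_le. Qed.

Lemma Cmod_RtoC_pos x : 0 <= x -> Cmod (RtoC x) = x.
Proof. intros. rewrite Cmod_R. apply Rabs_right; lra. Qed.

Lemma B_bound u a d : (Cmod u < 1 \/ u = RtoC 1) -> Class d a ->
  forall j, exists C, forall m, Cmod (Deltan j (B u a) m) <= C * Harm m ^ (S d) / INR (S m) ^ j.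
Proof.
  intros Hu Ha j.
  assert (Hf := filter_Delta u (B u a) a (B_rec u a)).
  destruct Hu as [Hu | Hu].
  - destruct (Ha j) as [K HK].
    destruct (filterR (Cmod u) (fun m => Cmod (Deltan j (B u a) m)) (fun m => Cmod (Deltan j a m))
                K d j) as [C HC].
    + split; auto. apply Cmod_ge_0.
    + intros m. rewrite Hf. eapply Rle_trans. apply Cmod_triangle. rewrite Cmod_mult. lra.
    + apply HK.
    + exists (Rabs C). intros m. eapply Rle_trans. apply abs_weak. 3: apply HC.
      pose proof (H_pow_ge1 d m); lra. apply pow_pos_INR.
      apply bound_mono. apply Rabs_pos. split. pose proof (H_pow_ge1 d m); lra. apply H_pow_le_S.
      split. apply pow_pos_INR. lra.
  - subst u. destruct j as [|j].
    + destruct (Ha O) as [K HK]. exists (Rabs K). intros m.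
      change (Deltan 0 (B (RtoC 1) a) m) with (B (RtoC 1) a m).
      assert (HK' : forall m, Cmod (a m) <= Rabs K * Harm m ^ d / INR (S m)).
      { intros k. specialize (HK k). change (Deltan 0 a k) with (a k) in HK.
        rewrite pow_1 in HK. apply abs_weak; auto. pose proof (H_pow_ge1 d k); lra. apply INRS_pos. }
      rewrite pow_O. unfold Rdiv. rewrite Rinv_1, Rmult_1_r.
      induction m.
      * unfold B. simpl csum. change (cpow (RtoC 1) 0) with (RtoC 1). rewrite Cmult_1_l.
        eapply Rle_trans. apply HK'. simpl INR. unfold Rdiv. rewrite Rinv_1, Rmult_1_r.
        apply Rmult_le_compat_l. apply Rabs_pos. apply H_pow_le_S.
      * rewrite B_rec, Cmult_1_l. eapply Rle_trans. apply Cmod_triangle.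
        specialize (HK' (S m)).
        assert (E : Harm (S m) ^ S d = Harm (S m) ^ d * (Harm m + / INR (S (S m)))).
        { rewrite <- H_S. simpl. ring. }
        rewrite E.
        assert (Harm m ^ S d <= Harm (S m) ^ d * Harm m).
        { simpl. rewrite Rmult_comm. apply Rmult_le_compat_r. pose proof (H_ge1 m); lra.
          apply H_pow_mono; lia. }
        assert (0 <= Rabs K) by apply Rabs_pos.
        unfold Rdiv in HK'. nra.
    + destruct (Ha j) as [K HK]. exists (Rabs K * 2 ^ d). intros m.
      rewrite Deltan_S, Hf, Cmult_1_l.
      replace (Cminus (Deltan j (B (RtoC 1) a) m) (Cplus (Deltan j (B (RtoC 1) a) m) (Deltan j a (S m))))
        with (Copp (Deltan j a (S m))) by ring.
      rewrite Cmod_opp. eapply Rle_trans. apply abs_weak. 3: apply HK.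
      pose proof (H_pow_ge1 d (S m)); lra. apply pow_pos_INR.
      eapply Rle_trans. apply shift_bound. apply Rabs_pos.
      apply bound_mono. pose proof (Rabs_pos K). pose proof (pow_lt 2 d). nra.
      split. pose proof (H_pow_ge1 d m); lra. apply H_pow_le_S.
      split. apply pow_pos_INR. lra.
Qed.

Lemma T_class u a d : (Cmod u < 1 \/ u = RtoC 1) -> Class d a -> Class (S d) (T u a).
Proof.
  intros Hu Ha. pose proof (B_bound u a d Hu Ha) as HB.
  assert (Hbc := B_T u a).
  intros j. induction j.
  - destruct (HB O) as [C HC]. exists (Rabs C). intros m.
    change (Deltan 0 (T u a) m) with (T u a m).
    assert (E : T u a m = Cmult (RtoC (/ INR (S m))) (B u a m)).
    { rewrite Hbc, Cmult_assoc, <- RtoC_mult, Rinv_l. ring. apply not_0_INR; lia. }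
    rewrite E, Cmod_mult, Cmod_RtoC_pos by (apply Rlt_le, Rinv_0_lt_compat, INRS_pos).
    specialize (HC m). change (Deltan 0 (B u a) m) with (B u a m) in HC.
    rewrite pow_O in HC. rewrite pow_1.
    apply abs_weak in HC; [|pose proof (H_pow_ge1 (S d) m); lra | lra].
    pose proof (INRS_pos m). unfold Rdiv in *. rewrite Rinv_1, Rmult_1_r in HC.
    rewrite Rmult_comm. apply Rmult_le_compat_r. apply Rlt_le, Rinv_0_lt_compat; lra. auto.
  - destruct IHj as [K HK]. destruct (HB (S j)) as [C HC].
    exists (Rabs C + INR (S j) * (Rabs K * 2 ^ S d)). intros m.
    pose proof (leibniz (B u a) (T u a) Hbc j m) as L.
    set (x := Deltan (S j) (T u a) m) in *.
    assert (Ex : Cmult (RtoC (INR (S m))) x =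
       Cplus (Deltan (S j) (B u a) m) (Cmult (RtoC (INR (S j))) (Deltan j (T u a) (S m))))
      by (rewrite L; ring).
    assert (Hm := INRS_pos m).
    assert (Hx : INR (S m) * Cmod x <= Cmod (Deltan (S j) (B u a) m) + INR (S j) * Cmod (Deltan j (T u a) (S m))).
    { rewrite <- (Cmod_RtoC_pos (INR (S m))) by lra. rewrite <- Cmod_mult, Ex.
      eapply Rle_trans. apply Cmod_triangle. rewrite Cmod_mult, Cmod_RtoC_pos. lra. apply pos_INR. }
    specialize (HC m). apply abs_weak in HC; [|pose proof (H_pow_ge1 (S d) m); lra | apply pow_pos_INR].
    specialize (HK (S m)). apply abs_weak in HK; [|pose proof (H_pow_ge1 (S d) (S m)); lra | apply pow_pos_INR].
    pose proof (shift_bound (Rabs K) (S d) (S j) m (Rabs_pos K)) as SB.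
    assert (HK2 := Rle_trans _ _ _ HK SB).
    assert (Hj := pos_INR (S j)).
    assert (Hsum : INR (S m) * Cmod x <= (Rabs C + INR (S j) * (Rabs K * 2 ^ S d)) * Harm m ^ S d / INR (S m) ^ S j).
    { eapply Rle_trans. apply Hx. unfold Rdiv in *.
      replace ((Rabs C + INR (S j) * (Rabs K * 2 ^ S d)) * Harm m ^ S d * / INR (S m) ^ S j)
        with (Rabs C * Harm m ^ S d * / INR (S m) ^ S j + INR (S j) * (Rabs K * 2 ^ S d * Harm m ^ S d * / INR (S m) ^ S j)) by ring.
      apply Rplus_le_compat; auto. apply Rmult_le_compat_l; auto. }
    apply (Rmult_le_reg_l (INR (S m))); auto.
    eapply Rle_trans. apply Hsum. right.
    change (INR (S m) ^ S (S j)) with (INR (S m) * INR (S m) ^ S j).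
    field. split. apply pow_nonzero; lra. lra.
Qed.

Lemma zero_after (a : nat -> C) : (forall k, (1 <= k)%nat -> a k = RtoC 0) ->
  forall j m, (1 <= m)%nat -> Deltan j a m = RtoC 0.
Proof. intros Ha j; induction j; intros m Hm. apply Ha; auto.
  rewrite Deltan_S, !IHj by lia. ring. Qed.

Lemma base_class : Class 0 (cseq (RtoC 0 :: nil)).
Proof.
  intros j. exists (Cmod (Deltan j (cseq (RtoC 0 :: nil)) 0)). intros m.
  destruct m.
  - simpl pow. change (INR 1) with 1. rewrite pow1. lra.
  - rewrite zero_after; [| |lia]. rewrite Cmod_0. apply Rmult_le_pos.
    rewrite pow_O, Rmult_1_r. apply Cmod_ge_0. apply Rlt_le, Rinv_0_lt_compat, pow_pos_INR.
    intros k Hk. destruct k. lia. simpl. ring.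
Qed.

Lemma list_class s : (forall si, In si s -> Cmod si < 1 \/ si = RtoC 1) ->
  Class (length s) (cseq (s ++ RtoC 0 :: nil)).
Proof.
  induction s as [|u s IH]; intros Hs. apply base_class.
  simpl length. rewrite <- app_comm_cons, cseq_cons. apply T_class.
  apply Hs; simpl; auto. apply IH. intros; apply Hs; simpl; auto.
Qed.

Lemma Rpower_pos x y : 0 < Rpower x y.
Proof. unfold Rpower. apply exp_pos. Qed.

Lemma ln_le' x y : 0 < x -> x <= y -> ln x <= ln y.
Proof. intros. destruct (Req_dec x y). subst; lra. left; apply ln_increasing; lra. Qed.

Lemma final_bound d eps : 0 < eps -> exists C, forall m, (1 <= m)%nat ->
  Harm m ^ d <= C * Rpower (INR m) eps.
Proof.
  intros He. set (dl := eps / (INR d + 1)).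
  assert (Hd0 := pos_INR d).
  assert (Hdl : 0 < dl) by (unfold dl; apply Rdiv_lt_0_compat; lra).
  set (c := (2 * dl + 1) / dl).
  exists (c ^ d). intros m Hm.
  set (x := INR m). assert (Hx : 1 <= x) by (unfold x; apply (le_INR 1); auto).
  set (y := Rpower x dl).
  assert (Hy : 1 <= y).
  { unfold y. rewrite <- (Rpower_O x) by lra. apply Rle_Rpower; lra. }
  assert (Hln : ln (INR (S m)) <= 1 + ln x).
  { assert (ln 2 <= 1) by (pose proof (ln_le_minus1 2); lra).
    apply Rle_trans with (ln (2 * x)).
    apply ln_le'. apply INRS_pos. rewrite S_INR; fold x; lra.
    rewrite ln_mult by lra. lra. }
  assert (Hly : dl * ln x <= y - 1).
  { unfold y. rewrite <- ln_Rpower. apply ln_le_minus1. apply Rpower_pos. }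
  assert (HH : Harm m <= c * y).
  { pose proof (H_le_ln m). unfold c.
    apply (Rmult_le_reg_l dl); auto.
    replace (dl * ((2 * dl + 1) / dl * y)) with ((2 * dl + 1) * y) by (field; lra).
    nra. }
  eapply Rle_trans. apply pow_incr. split. pose proof (H_ge1 m); lra. apply HH.
  rewrite Rpow_mult_distr. apply Rmult_le_compat_l. apply pow_le. unfold c; apply Rlt_le, Rdiv_lt_0_compat; lra.

  unfold y. rewrite <- Rpower_pow by apply Rpower_pos. rewrite Rpower_mult.
  apply Rle_Rpower; auto. unfold dl. apply (Rmult_le_reg_r (INR d + 1)). lra.
  replace (eps / (INR d + 1) * INR d * (INR d + 1)) with (eps * INR d) by (field; lra). nra.
Qed.

Theorem proposition3p3 (p l : nat) (s : list C) :
  (1 <= p)%nat -> length s = p ->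
  (forall si, In si s -> Cmod si < 1 \/ si = RtoC 1) ->
  forall eps : R, 0 < eps ->
  exists (K : R) (M : nat), forall m : nat, (M <= m)%nat ->
    Cmod (Deltan l (cseq (s ++ RtoC 0 :: nil)) m)
      <= K * Rpower (INR m) (- (INR l + 1 - eps)).
Proof.
  intros _ _ Hs eps He.
  destruct (list_class s Hs l) as [K HK].
  destruct (final_bound (length s) eps He) as [C HC].
  exists (Rabs K * C), 1%nat. intros m Hm.
  specialize (HK m). specialize (HC m Hm).
  set (d := length s) in *.
  assert (Hx : 1 <= INR m) by (apply (le_INR 1); auto).
  apply abs_weak in HK; [| pose proof (H_pow_ge1 d m); lra | apply pow_pos_INR].
  eapply Rle_trans. apply HK.
  replace (- (INR l + 1 - eps)) with (eps + - INR (S l)) by (rewrite S_INR; ring).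
  rewrite Rpower_plus, Rpower_Ropp, Rpower_pow by lra.
  assert (Hp : 0 < INR m ^ S l) by (apply pow_lt; lra).
  assert (Hp2 : INR m ^ S l <= INR (S m) ^ S l) by (apply pow_incr; split; [lra| apply le_INR; lia]).
  pose proof (Rabs_pos K).
  unfold Rdiv. rewrite !Rmult_assoc. apply Rmult_le_compat_l; auto. rewrite <- Rmult_assoc.
  apply Rmult_le_compat. pose proof (H_pow_ge1 d m); lra.
  apply Rlt_le, Rinv_0_lt_compat, pow_pos_INR. auto.
  apply Rinv_le_contravar; auto.
Qed.
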